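(* Let $n\ge2$ and let $N_1,N_2$ be $n\times n$ hermitian matrices over $\mathbb{F}_{q^2}$ of rank $n-1$ with $\operatorname{rank}(N_1-N_2)=1$. If $\{N_1+\lambda\mathbf{y}\mathbf{y}^\ast: 0\neq\lambda\in\mathbb{F}_q\}$ is a leaf of $N_1$, then $\{N_2+\lambda\mathbf{y}\mathbf{y}^\ast: 0\neq\lambda\in\mathbb{F}_q\}$ is a leaf of $N_2$.
   Context: $\mathbb{F}_{q^2}$ is the field with $q^2$ elements with involution $\bar x=x^q$, fixed field $\mathbb{F}_q$; $X^\ast=\bar X^\top$; hermitian means $A^\ast=A$. Leaf: if $A$ is hermitian of rank $s<n$ and $\mathbf{x}$ is not in the column space of $A$, then $\{A+\lambda\mathbf{x}\mathbf{x}^\ast: 0\ne\lambda\in\mathbb{F}_q\}$ is a leaf of $A$. *)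

(* Defs.v *)
From HB Require Import structures.
From mathcomp Require Import all_boot all_order all_algebra.
Set Implicit Arguments. Unset Strict Implicit. Unset Printing Implicit Defensive.
Import GRing.Theory.
Local Open Scope ring_scope.

(* F plays the role of F_{q^2}: a finite field with #|F| = q^2.
   The involution is x |-> x^q; its fixed field is F_q. *)
Definition conjq (F : finFieldType) (q : nat) (x : F) : F := x ^+ q.

Definition mxstar (F : finFieldType) (q : nat) (m n : nat) (X : 'M[F]_(m, n))
  : 'M[F]_(n, m) := map_mx (conjq q) X^T.

Definition herm_mx (F : finFieldType) (q n : nat) (A : 'M[F]_n) : bool :=
  mxstar q A == A.

Definition Fq_nonzero (F : finFieldType) (q : nat) : {set F} :=
  [set l : F | (l != 0) && (conjq q l == l)].

Definition leafset (F : finFieldType) (q n : nat) (A : 'M[F]_n) (x : 'cV[F]_n)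
  : {set 'M[F]_n} :=
  [set A + l *: (x *m mxstar q x) | l in Fq_nonzero F q].

(* x lies in the column space of A  (column space of A = row space of A^T) *)
Definition in_colspace (F : finFieldType) (n : nat) (A : 'M[F]_n) (x : 'cV[F]_n)
  : bool := (x^T <= A^T)%MS.

Definition is_leaf (F : finFieldType) (q n : nat) (A : 'M[F]_n)
  (S : {set 'M[F]_n}) : Prop :=
  [/\ herm_mx q A, (\rank A < n)%N &
      exists x : 'cV[F]_n, ~~ in_colspace A x /\ S = leafset q A x].

(* Main.v *)
Require Import Defs.
From HB Require Import structures.
From mathcomp Require Import all_boot all_order all_algebra.
From mathcomp Require Import all_fingroup all_solvable all_field.
Import GRing.Theory.
Local Open Scope ring_scope.

Lemma conj_add {F : finFieldType} {q : nat} (hF : #|F| = (q ^ 2)%N) (x y : F) :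
  conjq q (x + y) = conjq q x + conjq q y.
Proof.
rewrite /conjq.
have [p pr_p pcharFp] := finPcharP F.
apply: exprDn_pchar.
have h1 : p.-nat #|F|.
  have := abelem_pgroup (fin_ring_pchar_abelem pcharFp).
  by rewrite /pgroup cardsT.
have h2 : p.-nat q by move: h1; rewrite hF pnatX orbF.
by rewrite (eq_pnat _ (pcharf_eq pcharFp)).
Qed.

Lemma herm_ker (F : finFieldType) (q n : nat)
  (hD : forall x y : F, conjq q (x + y) = conjq q x + conjq q y)
  (N : 'M[F]_n) (hN : herm_mx q N) (v : 'rV[F]_n) :
  v *m N^T = 0 -> N^T *m (map_mx (conjq q) v)^T = 0.
Proof.
move=> hv; apply/matrixP => i k; rewrite ord1.
have c0 : conjq q (0 : F) = 0.
  have h := hD 0 0; rewrite addr0 in h.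
  by apply: (@addrI _ (conjq q 0)); rewrite addr0 -h.
transitivity (conjq q ((v *m N^T) 0 i)); last by rewrite hv !mxE c0.
rewrite !mxE (big_morph (conjq q) hD c0).
apply: eq_bigr => j _.
move/eqP: hN => hN.
rewrite !mxE -[in N j i]hN !mxE /conjq exprMn mulrC.
by [].
Qed.

Theorem lemma3p6 (F : finFieldType) (q n : nat) (hF : #|F| = (q ^ 2)%N)
  (hn : (2 <= n)%N) (N1 N2 : 'M[F]_n) (y : 'cV[F]_n)
  (hN1 : herm_mx q N1) (hN2 : herm_mx q N2)
  (r1 : \rank N1 = n.-1) (r2 : \rank N2 = n.-1)
  (r12 : \rank (N1 - N2) = 1%N)
  (hleaf : is_leaf q N1 (leafset q N1 y)) :
  is_leaf q N2 (leafset q N2 y).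
Proof.
have hD := conj_add hF.
case: hleaf => _ _ [x [hx hS]].
have hy : ~~ in_colspace N1 y.
  apply/negP => hyc; apply/negP: hx; apply/negPn.
  have one_in : (1 : F) \in Fq_nonzero F q.
    by rewrite inE oner_eq0 /conjq expr1n eqxx.
  have : N1 + 1 *: (x *m mxstar q x) \in leafset q N1 x.
    by apply/imsetP; exists 1.
  rewrite -hS => /imsetP [l _] /addrI; rewrite scale1r => hX.
  case: (boolP [exists i, x i 0 != 0]) => [/existsP [i hi] | hno]; last first.
    have -> : x = 0.
      apply/matrixP => i j; rewrite ord1 mxE.
      by apply/eqP; apply: contraNT hno => hne; apply/existsP; exists i.
    by rewrite /in_colspace trmx0 sub0mx.
  have hrow : row i ((x *m mxstar q x)^T) = conjq q (x i 0) *: x^T.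
    apply/rowP => j; rewrite !mxE big_ord1 !mxE mulrC.
    by [].
  have hXy : ((x *m mxstar q x)^T <= y^T)%MS.
    rewrite hX scalemxAl trmx_mul; apply: submx_trans (submxMl _ _) _.
    by rewrite linearZ /=; apply: scalemx_sub.
  have hs : (conjq q (x i 0) *: x^T <= N1^T)%MS.
    by rewrite -hrow; apply: submx_trans (row_sub _ _) _; apply: submx_trans hXy hyc.
  have hc : conjq q (x i 0) != 0 by rewrite /conjq expf_eq0 negb_and hi orbT.
  rewrite /in_colspace.
  have -> : x^T = (conjq q (x i 0))^-1 *: (conjq q (x i 0) *: x^T).
    by rewrite scalerA mulVf // scale1r.
  exact: scalemx_sub.
split => //.
  by rewrite r2 ltn_predL; apply: leq_trans hn.
exists y; split => //.
set R1 := N1^T; set R2 := N2^T; set E := R1 - R2.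
have rR1 : \rank R1 = n.-1 by rewrite mxrank_tr.
have rE : \rank E = 1%N by rewrite /E /R1 /R2 -linearB /= mxrank_tr.
case: (boolP (E <= R1)%MS) => hE.
  apply/negP => hy2; move/negP: hy; apply.
  rewrite /in_colspace -/R1 -/R2 in hy2 *; apply: submx_trans hy2 _.
  have -> : R2 = R1 + (-1) *: E by rewrite scaleN1r /E opprB addrC subrK.
  by apply: addmx_sub => //; apply: scalemx_sub.
exfalso.
have cap0 : (R1 :&: E)%MS = 0.
  apply/eqP; rewrite -mxrank_eq0.
  have : (\rank (R1 :&: E)%MS <= 1)%N by rewrite -rE mxrankS // capmxSr.
  rewrite leq_eqVlt ltnS leqn0 => /orP [/eqP h1 | //].
  have := mxrank_leqif_eq (capmxSr R1 E); case=> _.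
  rewrite h1 rE eqxx => /esym /andP [_ h]; move: hE.
  by rewrite (submx_trans h (capmxSl _ _)).
have full : row_full (R1 + E)%MS.
  apply/eqP; have := mxrank_sum_cap R1 E.
  rewrite cap0 mxrank0 addn0 rR1 rE addn1 prednK; first by [].
  by apply: leq_trans hn.
set v := nz_row (kermx R2).
have vR2 : v *m R2 = 0 by apply/sub_kermxP; apply: nz_row_sub.
have vnz : v != 0.
  rewrite nz_row_eq0 -mxrank_eq0 mxrank_ker mxrank_tr r2.
  by rewrite subn_eq0 -ltnNge ltn_predL; apply: leq_trans hn.
have vR1 : v *m R1 = 0.
  apply/eqP; rewrite -submx0 -cap0 sub_capmx submxMl /=.
  have -> : v *m R1 = v *m E by rewrite /E mulmxBr vR2 subr0.
  exact: submxMl.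
set u := (map_mx (conjq q) v)^T.
have hu1 : R1 *m u = 0 by apply: herm_ker.
have hu2 : R2 *m u = 0 by apply: herm_ker.
have huE : E *m u = 0 by rewrite /E mulmxBl hu1 hu2 subrr.
have h1 : (1%:M <= col_mx R1 E)%MS.
  by rewrite -addsmxE; apply: submx_full.
case/submxP: h1 => D hDm.
have u0 : u = 0.
  by rewrite -[u]mul1mx hDm -mulmxA mul_col_mx hu1 huE col_mx0 mulmx0.
move/negP: vnz; apply; apply/eqP/matrixP => i j; rewrite ord1 mxE.
have := congr1 (fun M : 'M[F]_(n,1) => M j 0) u0; rewrite !mxE /conjq => /eqP.
by rewrite expf_eq0 => /andP [_ /eqP].
Qed.
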